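(* Let $c,\alpha,\beta>0$, $\mathbf A\in\mathbb{R}^{2\times2}$ symmetric positive definite, $\rho>0$, $\mathbf m\in\mathbb{R}^2$, $H\in\mathbb{R}$, and let $$\phi(\tilde\rho)=\rho+c\big\langle(2c\alpha\mathbf A+\tilde\rho\mathbf I)^{-1}\mathbf m,\ \alpha\mathbf A(2c\alpha\mathbf A+\tilde\rho\mathbf I)^{-1}\mathbf m\big\rangle+c\,(2c\beta+\tilde\rho)^{-2}\beta H^2.$$ If $c$ is large enough that $\frac{1}{4c^2}\big(\mathbf m^{\mathrm T}(\alpha\mathbf A)^{-2}\mathbf m+\beta^{-2}H^2\big)<1$, then for every initial guess $\tilde\rho^{(0)}\in(0,\infty)$ the iteration $\tilde\rho^{(\ell+1)}=\phi(\tilde\rho^{(\ell)})$, $\ell=0,1,2,\dots$, converges to the unique fixed point $\rho^*\in(0,\infty)$ of $\phi$.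
   Context: None beyond the statement: $\mathbf I$ is the $2\times2$ identity and $\langle\cdot,\cdot\rangle$ the Euclidean inner product. (The fixed point $\rho^*$ is the density component of the proximal operator of the WFR cost $J(\mathbf m,\rho,H)=\alpha\rho^{-1}\mathbf m^{\mathrm T}\mathbf A\mathbf m+\beta\rho^{-1}H^2$.) *)

(* Defs.v *)
From HB Require Import structures.
From mathcomp Require Import all_boot all_order all_algebra.
From mathcomp Require Import all_classical all_reals all_analysis.
Set Implicit Arguments. Unset Strict Implicit. Unset Printing Implicit Defensive.
Import Order.TTheory GRing.Theory Num.Theory.
Local Open Scope ring_scope.

Definition inner2 {R : realType} (u v : 'cV[R]_2) : R := (u^T *m v) 0 0.

Definition spd2 {R : realType} (A : 'M[R]_2) : Prop :=
  A^T = A /\ forall v : 'cV[R]_2, v != 0 -> 0 < inner2 v (A *m v).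

Definition phi {R : realType} (c alpha beta rho : R) (A : 'M[R]_2)
    (m : 'cV[R]_2) (H : R) (rt : R) : R :=
  let M := invmx (2 * c * alpha *: A + rt%:M) in
  rho + c * inner2 (M *m m) ((alpha *: A) *m (M *m m))
      + c * (2 * c * beta + rt) ^- 2 * beta * H ^+ 2.

(* Main.v *)
Require Import Defs.
From HB Require Import structures.
From mathcomp Require Import all_boot all_order all_algebra.
From mathcomp Require Import all_classical all_reals all_analysis.
From mathcomp Require Import ring lra.
Import Order.TTheory GRing.Theory Num.Theory.
Import numFieldNormedType.Exports.
Local Open Scope classical_set_scope.
Local Open Scope ring_scope.

Lemma sum2 (R : nmodType) (F : 'I_2 -> R) : \sum_i F i = F 0 + F 1.
Proof. by rewrite big_ord_recl big_ord1; congr (_ + F _); apply: val_inj. Qed.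

Lemma ord2P (i : 'I_2) : i = 0 \/ i = 1.
Proof. case: i => [[|[|//]]] ?; [left|right]; exact: val_inj. Qed.

Lemma inner2E {R : realType} (x y : 'cV[R]_2) :
  inner2 x y = x 0 0 * y 0 0 + x 1 0 * y 1 0.
Proof. by rewrite /inner2 mxE sum2 !mxE. Qed.

Lemma mulmx2E {R : realType} (A : 'M[R]_2) (x : 'cV[R]_2) i :
  (A *m x) i 0 = A i 0 * x 0 0 + A i 1 * x 1 0.
Proof. by rewrite mxE sum2. Qed.

Definition col2 {R : realType} (a b : R) : 'cV[R]_2 :=
  \matrix_(i, j) (if i == 0 then a else b).

Lemma col2E0 {R : realType} (a b : R) : col2 a b 0 0 = a.
Proof. by rewrite mxE. Qed.
Lemma col2E1 {R : realType} (a b : R) : col2 a b 1 0 = b.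
Proof. by rewrite mxE. Qed.

Lemma invmx2 {R : realType} (K : 'M[R]_2) (x : 'cV[R]_2) :
  K 0 0 * K 1 1 - K 0 1 * K 1 0 != 0 ->
  invmx K *m x = col2 ((K 1 1 * x 0 0 - K 0 1 * x 1 0) / (K 0 0 * K 1 1 - K 0 1 * K 1 0))
                      ((K 0 0 * x 1 0 - K 1 0 * x 0 0) / (K 0 0 * K 1 1 - K 0 1 * K 1 0)).
Proof.
move=> d0.
pose N : 'M[R]_2 := \matrix_(i, j) ((if i == 0 then (if j == 0 then K 1 1 else - K 0 1)
   else (if j == 0 then - K 1 0 else K 0 0)) / (K 0 0 * K 1 1 - K 0 1 * K 1 0)).
have KN : K *m N = 1%:M.
  apply/matrixP => i j; rewrite mxE sum2 !mxE.
  by case: (ord2P i) => ->; case: (ord2P j) => -> /=; field.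
have [Ku _] := mulmx1_unit KN.
have -> : invmx K = N by rewrite -[invmx K]mulmx1 -KN mulmxA mulVmx // mul1mx.
apply/matrixP => i j; rewrite (ord1 j) mulmx2E !mxE.
by case: (ord2P i) => -> /=; field.
Qed.

Lemma eig2 {R : realType} (p q s : R) : exists u v l1 l2 : R,
  [/\ 0 < u ^+ 2 + v ^+ 2, p * (u ^+ 2 + v ^+ 2) = l1 * u ^+ 2 + l2 * v ^+ 2,
      q * (u ^+ 2 + v ^+ 2) = (l1 - l2) * u * v &
      s * (u ^+ 2 + v ^+ 2) = l1 * v ^+ 2 + l2 * u ^+ 2].
Proof.
have [->|q0] := eqVneq q 0.
  exists 1, 0, p, s; split; rewrite ?expr0n ?expr1n /= ?addr0 ?mulr0 ?mulr1 ?ltr01 //; ring.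
pose D := (p - s) ^+ 2 + 4 * q ^+ 2.
have D0 : 0 <= D by rewrite /D addr_ge0 // ?sqr_ge0 // mulr_ge0 // sqr_ge0.
pose S : R := Num.sqrt D.
have SS : S ^+ 2 = D by rewrite sqr_sqrtr.
pose l1 := (p + s + S) / 2; pose l2 := (p + s - S) / 2.
have Kq : q ^+ 2 = - (l2 - p) * (l1 - p).
  rewrite /l1 /l2; apply/eqP; rewrite -subr_eq0; apply/eqP.
  have -> : q ^+ 2 - - ((p + s - S) / 2 - p) * ((p + s + S) / 2 - p)
     = (4 * q ^+ 2 + (p - s) ^+ 2 - S ^+ 2) / 4 by field.
  by rewrite SS /D; field.
exists q, (l1 - p), l1, l2; split.
- have h1 : 0 < q ^+ 2 by rewrite exprn_even_gt0.
  have h2 := sqr_ge0 (l1 - p); lra.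
- rewrite Kq; ring.
- by rewrite Kq /l1 /l2; field.
- by rewrite Kq /l1 /l2; field.
Qed.

Definition F {R : realType} (c a w r : R) := c * a * w / (2 * c * a + r) ^+ 2.

Lemma eq01 : (0 == 1 :> 'I_2) = false. Proof. by []. Qed.
Lemma eq10 : (1 == 0 :> 'I_2) = false. Proof. by []. Qed.

Lemma reduce {R : realType} (c alpha beta rho : R) (A : 'M[R]_2)
    (m : 'cV[R]_2) (H : R) :
  0 < c -> 0 < alpha -> 0 < beta -> spd2 A ->
  exists l1 l2 w1 w2 : R, [/\ 0 < l1, 0 < l2, 0 <= w1 & 0 <= w2] /\
    (forall rt, 0 <= rt -> phi c alpha beta rho A m H rt =
       rho + F c (alpha * l1) w1 rt + F c (alpha * l2) w2 rt + F c beta (H ^+ 2) rt) /\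
    inner2 m (invmx (alpha *: A) *m invmx (alpha *: A) *m m) =
       w1 / (alpha * l1) ^+ 2 + w2 / (alpha * l2) ^+ 2.
Proof.
move=> c0 a0 b0 [AT Apd].
have A10 : A 1 0 = A 0 1 by rewrite -{1}AT mxE.
have [u [v [l1 [l2 [n0 e00 e01 e11]]]]] := eig2 (A 0 0) (A 0 1) (A 1 1).
set n := u ^+ 2 + v ^+ 2 in n0 e00 e01 e11.
have nn0 : n != 0 by rewrite gt_eqF.
have E00 : A 0 0 = (l1 * u ^+ 2 + l2 * v ^+ 2) / n by rewrite -e00 mulfK.
have E01 : A 0 1 = (l1 - l2) * u * v / n by rewrite -e01 mulfK.
have E11 : A 1 1 = (l1 * v ^+ 2 + l2 * u ^+ 2) / n by rewrite -e11 mulfK.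
have quad : forall x y, inner2 (col2 x y) (A *m col2 x y) =
   (l1 * (u * x + v * y) ^+ 2 + l2 * (u * y - v * x) ^+ 2) / n.
  move=> x y; rewrite inner2E !mulmx2E !col2E0 !col2E1 A10 E00 E01 E11; field.
  done.
have l1p : 0 < l1.
  have nz : col2 u v != 0.
    apply/eqP => /matrixP h; have h0 := h 0 0; have h1 := h 1 0.
    rewrite col2E0 mxE in h0; rewrite col2E1 mxE in h1.
    by move: n0; rewrite /n h0 h1 expr0n /= addr0 ltxx.
  have := Apd _ nz; rewrite quad.
  have -> : (l1 * (u * u + v * v) ^+ 2 + l2 * (u * v - v * u) ^+ 2) / n = l1 * n.
    by rewrite /n; field.
  by rewrite pmulr_lgt0.
have l2p : 0 < l2.
  have nz : col2 (- v) u != 0.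
    apply/eqP => /matrixP h; have h0 := h 0 0; have h1 := h 1 0.
    rewrite col2E0 mxE in h0; rewrite col2E1 mxE in h1.
    move: n0; rewrite /n h1; move/eqP: h0; rewrite oppr_eq0 => /eqP ->.
    by rewrite expr0n /= addr0 ltxx.
  have := Apd _ nz; rewrite quad.
  have -> : (l1 * (u * - v + v * u) ^+ 2 + l2 * (u * u - v * - v) ^+ 2) / n = l2 * n.
    by rewrite /n; field.
  by rewrite pmulr_lgt0.
exists l1, l2, ((u * m 0 0 + v * m 1 0) ^+ 2 / n), ((u * m 1 0 - v * m 0 0) ^+ 2 / n).
have n00 : 0 <= n by apply: ltW.
split; [split => //; by rewrite divr_ge0 // sqr_ge0| split].
- move=> rt rt0; rewrite /phi.
  set K := 2 * c * alpha *: A + rt%:M.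
  have d1 : 0 < 2 * c * (alpha * l1) + rt by rewrite ltr_wpDr // !mulr_gt0.
  have d2 : 0 < 2 * c * (alpha * l2) + rt by rewrite ltr_wpDr // !mulr_gt0.
  have d3 : 0 < 2 * c * beta + rt by rewrite ltr_wpDr // !mulr_gt0.
  have Kdet : K 0 0 * K 1 1 - K 0 1 * K 1 0 =
      (2 * c * (alpha * l1) + rt) * (2 * c * (alpha * l2) + rt).
    rewrite /K !mxE eqxx eq01 eq10 /= A10 E00 E01 E11 mulr1n mulr0n !addr0; rewrite /n; field.
    done.
  rewrite invmx2; last by rewrite Kdet mulf_neq0 // gt_eqF.
  rewrite Kdet inner2E !mulmx2E !col2E0 !col2E1 /K !mxE eqxx eq01 eq10 /= A10 E00 E01 E11 mulr1n mulr0n !addr0 /F.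
  rewrite /n; field.
  by rewrite -/n nn0 !gt_eqF.
- have Bdet : (alpha *: A) 0 0 * (alpha *: A) 1 1 - (alpha *: A) 0 1 * (alpha *: A) 1 0 =
      (alpha * l1) * (alpha * l2).
    rewrite !mxE A10 E00 E01 E11 /n; field.
    done.
  have Bn : (alpha * l1) * (alpha * l2) != 0 by rewrite !mulf_neq0 // gt_eqF.
  rewrite -mulmxA [invmx _ *m m]invmx2 ?Bdet // invmx2 ?Bdet //.
  rewrite inner2E !col2E0 !col2E1 !mxE A10 E00 E01 E11 /n; field.
  by rewrite -/n nn0 !gt_eqF.
Qed.

Lemma F_ge0 {R : realType} (c a w r : R) : 0 < c -> 0 < a -> 0 <= w -> 0 <= F c a w r.
Proof. by move=> c0 a0 w0; rewrite /F divr_ge0 ?sqr_ge0 // !mulr_ge0 // ltW. Qed.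

Lemma cube_le {R : realType} (d X Y : R) : 0 < d -> d <= X -> d <= Y -> d ^+ 3 <= X * Y ^+ 2.
Proof. move=> d0 dX dY; have d0w := ltW d0; rewrite exprS; apply: ler_pM => //; first exact: sqr_ge0. by rewrite !expr2; apply: ler_pM. Qed.

Lemma F_lip {R : realType} (c a w r s : R) : 0 < c -> 0 < a -> 0 <= w -> 0 <= r -> 0 <= s ->
  `|F c a w r - F c a w s| <= w / (4 * c ^+ 2 * a ^+ 2) * `|r - s|.
Proof.
move=> c0 a0 w0 r0 s0.
set d := 2 * c * a.
have d0 : 0 < d by rewrite /d !mulr_gt0.
have X0 : 0 < d + r by rewrite ltr_wpDr.
have Y0 : 0 < d + s by rewrite ltr_wpDr.
have -> : F c a w r - F c a w s = (c * a * w) * ((d + r) * (d + s) ^+ 2)^-1 * (s - r)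
     + (c * a * w) * ((d + r) ^+ 2 * (d + s))^-1 * (s - r).
  rewrite /F -/d; field; by rewrite !gt_eqF.
rewrite -mulrDl -mulrDr normrM distrC ler_wpM2r //.
have caw : 0 <= c * a * w by rewrite !mulr_ge0 // ltW.
have h1 : ((d + r) * (d + s) ^+ 2)^-1 <= (d ^+ 3)^-1.
  rewrite lef_pV2 ?posrE ?exprn_gt0 ?mulr_gt0 //; by apply: cube_le => //; rewrite lerDl.
have h2 : ((d + r) ^+ 2 * (d + s))^-1 <= (d ^+ 3)^-1.
  rewrite lef_pV2 ?posrE ?exprn_gt0 ?mulr_gt0 // mulrC; by apply: cube_le => //; rewrite lerDl.
have Xw := ltW X0; have Yw := ltW Y0.
rewrite ger0_norm; last by rewrite mulr_ge0 // addr_ge0 // invr_ge0 mulr_ge0 // sqr_ge0.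
rewrite mulrDr; apply: (le_trans (lerD (ler_wpM2l caw h1) (ler_wpM2l caw h2))).
rewrite le_eqVlt; apply/orP; left; apply/eqP; rewrite /d; field.
by rewrite !gt_eqF.
Qed.
Lemma fixpt {R : realType} (f : R -> R) (rho k : R) : 0 < rho -> 0 <= k -> k < 1 ->
  (forall r, 0 <= r -> rho <= f r) ->
  (forall r s, 0 <= r -> 0 <= s -> `|f r - f s| <= k * `|r - s|) ->
  exists rstar : R, [/\ 0 < rstar, f rstar = rstar,
    (forall r, 0 < r -> f r = r -> r = rstar) &
    (forall r0, 0 < r0 -> iter n f r0 @[n --> \oo] --> rstar)].
Proof.
move=> rho0 k0 k1 fge lip.
pose g (x : R) := f `|x|.
have glip (x y : R) : `|g x - g y| <= k * `|x - y|.
  apply: (le_trans (lip _ _ (normr_ge0 _) (normr_ge0 _))).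
  by apply: ler_wpM2l => //; exact: ler_dist_dist.
have gc : continuous g.
  move=> x; apply/cvgrPdist_lt => e e0.
  have ek : 0 < e / (k + 1) by rewrite divr_gt0 // ltr_wpDl.
  near=> y.
  have hy : `|x - y| < e / (k + 1) by near: y; exact: (@cvgr_dist_lt _ _ _ (nbhs x) _ id x (@cvg_id _ (nbhs x)) _ ek).
  apply: (le_lt_trans (glip x y)).
  apply: (le_lt_trans (_ : _ <= (k + 1) * `|x - y|)); first by rewrite ler_wpM2r // lerDl.
  by rewrite -ltr_pdivlMl ?ltr_wpDl // mulrC.
pose psi (x : R) := g x - x.
have psic : continuous psi by move=> x; apply: cvgB; [exact: gc | exact: cvg_id].
pose t := (f rho - rho) / (1 - k).
have k1' : 0 < 1 - k by rewrite subr_gt0.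
have ht : (1 - k) * t = f rho - rho by rewrite /t mulrC divfK // gt_eqF.
have frho := fge rho (ltW rho0).
have t0 : 0 <= t by rewrite /t divr_ge0 ?subr_ge0 // ltW.
pose b := rho + t.
have b0 : 0 <= b by rewrite addr_ge0 // ltW.
have psia : psi rho = f rho - rho by rewrite /psi /g ger0_norm // ltW.
have psib : psi b <= 0.
  rewrite /psi /g ger0_norm //.
  have bt : b - rho = t by rewrite /b addrAC subrr add0r.
  have := lip b rho b0 (ltW rho0); rewrite bt [`|t|]ger0_norm //.
  move=> h0; have h := le_trans (ler_norm _) h0; rewrite /b in h.
  rewrite mulrBl mul1r in ht; lra.
have [rs rsin psirs] : exists2 c, c \in `[rho, b] & psi c = 0.
  apply: IVT; first by rewrite lerDl.
    exact: continuous_subspaceT.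
  by rewrite ge_min le_max psia psib subr_ge0 frho orbT.
move: rsin; rewrite in_itv /= => /andP[rsr _].
have rs0 : 0 < rs by apply: lt_le_trans rsr.
have frs : f rs = rs.
  by move: psirs; rewrite /psi /g ger0_norm ?ltW // => /eqP; rewrite subr_eq0 => /eqP.
exists rs; split => //.
- move=> r r0 fr.
  have := lip r rs (ltW r0) (ltW rs0); rewrite fr frs => h.
  have hn : `|r - rs| <= 0.
    have := normr_ge0 (r - rs); nra.
  by apply/eqP; rewrite -subr_eq0 -normr_le0.
- move=> r0 r00.
  have pos n : 0 < iter n f r0.
    elim: n => [//|n IH]; rewrite iterS; exact: lt_le_trans rho0 (fge _ (ltW IH)).
  pose C := `|r0 - rs|.
  have bnd n : `|iter n f r0 - rs| <= k ^+ n * C.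
    elim: n => [|n IH]; first by rewrite expr0 mul1r.
    rewrite iterS -{1}frs; apply: le_trans (lip _ _ (ltW (pos n)) (ltW rs0)) _.
    by rewrite exprS -mulrA ler_wpM2l.
  have kn : `|k| < 1 by rewrite ger0_norm.
  have e0 : (fun n => k ^+ n * C) @ \oo --> (0 : R).
    rewrite -(mul0r C); exact: cvgMr_tmp (cvg_expr kn).
  apply: (@squeeze_cvgr _ _ _ _ (fun n => rs - k ^+ n * C) (fun n => rs + k ^+ n * C)).
  + near=> n; have := bnd n; rewrite ler_norml; move=> /andP[h1 h2].
    by apply/andP; split; lra.
  + rewrite -[X in _ --> X](subr0 rs); exact: cvgB (cvg_cst rs) e0.
  + rewrite -[X in _ --> X](addr0 rs); exact: cvgD (cvg_cst rs) e0.
Unshelve. all: by end_near.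
Qed.

Theorem mainTheorem15 (R : realType) (c alpha beta rho : R) (A : 'M[R]_2)
    (m : 'cV[R]_2) (H : R) :
  0 < c -> 0 < alpha -> 0 < beta -> spd2 A -> 0 < rho ->
  (4 * c ^+ 2)^-1 *
    (inner2 m (invmx (alpha *: A) *m invmx (alpha *: A) *m m) + beta ^- 2 * H ^+ 2) < 1 ->
  exists rstar : R,
    [/\ 0 < rstar, phi c alpha beta rho A m H rstar = rstar,
        (forall r : R, 0 < r -> phi c alpha beta rho A m H r = r -> r = rstar) &
        (forall r0 : R, 0 < r0 ->
           iter n (phi c alpha beta rho A m H) r0 @[n --> \oo] --> rstar)].
Proof.
move=> c0 a0 b0 Aspd rho0 hyp.
have [l1 [l2 [w1 [w2 [[l1p l2p w1p w2p] [phiE innE]]]]]] := @reduce R c alpha beta rho A m H c0 a0 b0 Aspd.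
rewrite innE in hyp.
have al1 : 0 < alpha * l1 by rewrite mulr_gt0.
have al2 : 0 < alpha * l2 by rewrite mulr_gt0.
have H0 : 0 <= H ^+ 2 by rewrite sqr_ge0.
apply: (@fixpt R _ rho ((4 * c ^+ 2)^-1 *
    (w1 / (alpha * l1) ^+ 2 + w2 / (alpha * l2) ^+ 2 + beta ^- 2 * H ^+ 2))) => //.
- apply: mulr_ge0; first by rewrite invr_ge0 mulr_ge0 // sqr_ge0.
  apply: addr_ge0; first by apply: addr_ge0; apply: divr_ge0 => //; exact: sqr_ge0.
  by apply: mulr_ge0 => //; rewrite invr_ge0 exprn_ge0 // ltW.
- move=> r r0; rewrite phiE // -!addrA lerDl !addr_ge0 // F_ge0 //.
- move=> r s r0 s0; rewrite !phiE //.
  set A1 := F c (alpha * l1) w1 r; set B1 := F c (alpha * l1) w1 s.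
  set A2 := F c (alpha * l2) w2 r; set B2 := F c (alpha * l2) w2 s.
  set A3 := F c beta (H ^+ 2) r; set B3 := F c beta (H ^+ 2) s.
  have -> : rho + A1 + A2 + A3 - (rho + B1 + B2 + B3) = (A1 - B1) + (A2 - B2) + (A3 - B3)
    by ring.
  have -> : (4 * c ^+ 2)^-1 * (w1 / (alpha * l1) ^+ 2 + w2 / (alpha * l2) ^+ 2
      + beta ^- 2 * H ^+ 2) = w1 / (4 * c ^+ 2 * (alpha * l1) ^+ 2)
      + w2 / (4 * c ^+ 2 * (alpha * l2) ^+ 2) + H ^+ 2 / (4 * c ^+ 2 * beta ^+ 2).
    by field; rewrite !gt_eqF.
  rewrite mulrDl (mulrDl _ _ `|r - s|).
  apply: le_trans (ler_normD _ _) _; apply: lerD; last by apply: F_lip.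
  apply: le_trans (ler_normD _ _) _; apply: lerD; by apply: F_lip.
Qed.
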